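(* Let $(S,\mathrm{dist})$ be a finite metric space with $\operatorname{diam}(S)=1$, partitioned as $S=S_+\cup S_-$, with margin $\gamma=\min_{x\in S_+,y\in S_-}\mathrm{dist}(x,y)\in(0,1)$. Let $N_0\subset S$ be a $\gamma$-net of $S$. Run the following pruning procedure on a set $N$ initialized to $N_0$: for $i=0,-1,-2,\dots,\lceil\log_2\gamma\rceil$ (in this order), and for each point $p$ that is in the current set $N$ (processed one at a time), if the distance from $p$ to every point of $N$ with label opposite to that of $p$ is at least $2\cdot 2^i$ (vacuously true if there is no such point), then remove from $N$ every point $q\neq p$ with $\mathrm{dist}(p,q)<2^i-\gamma$. Then the final set $N$ is consistent with $S$.
   Context: A $\gamma$-net of $S$ is a subset $N_0\subset S$ whose distinct points are pairwise at distance $\ge\gamma$ and such that every point of $S$ is at distance strictly less than $\gamma$ from some point of $N_0$. A subset $S'\subset S$ is consistent with $S$ if for every $p\in S$, every nearest neighbor of $p$ in $S'$ belongs to the same class ($S_+$ or $S_-$) as $p$. *)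

(* Defs.v *)
From HB Require Import structures.
From mathcomp Require Import all_boot all_order all_algebra.
Set Implicit Arguments. Unset Strict Implicit. Unset Printing Implicit Defensive.
Import Order.TTheory GRing.Theory Num.Theory.
Local Open Scope ring_scope.

Section Defs.
Variables (R : realFieldType) (T : finType) (dist : T -> T -> R).

Definition is_metric : Prop :=
  [/\ forall x y, 0 <= dist x y,
      forall x y, dist x y = 0 <-> x = y,
      forall x y, dist x y = dist y x &
      forall x y z, dist x z <= dist x y + dist y z].

Definition diam_one : Prop :=
  (forall x y, dist x y <= 1) /\ exists x y, dist x y = 1.

Variable lab : T -> bool. (* true = S_+, false = S_- *)

Definition is_margin (gamma : R) : Prop :=
  (forall x y, lab x -> ~~ lab y -> gamma <= dist x y) /\
  exists x y, [/\ lab x, ~~ lab y & dist x y = gamma].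

Definition is_net (gamma : R) (N0 : {set T}) : Prop :=
  (forall p q, p \in N0 -> q \in N0 -> p != q -> gamma <= dist p q) /\
  (forall x, exists2 p, p \in N0 & dist x p < gamma).

Definition consistent (N : {set T}) : Prop :=
  forall p q, q \in N -> (forall q', q' \in N -> dist p q <= dist p q') ->
    lab q = lab p.

Definition prune_step (gamma r : R) (N : {set T}) (p : T) : {set T} :=
  if (p \in N) && [forall q in N, (lab q != lab p) ==> (2 * r <= dist p q)]
  then [set q in N | (q == p) || ~~ (dist p q < r - gamma)]
  else N.

Definition prune_round (gamma r : R) (N : {set T}) (s : seq T) : {set T} :=
  foldl (prune_step gamma r) N s.

(* rounds for i = 0, -1, ..., -K (scale 2^i = (2^k)^-1 with k = -i),
   the round for k using the processing order ord k *)
Definition prune (gamma : R) (ord : nat -> seq T) (K : nat) (N0 : {set T}) :=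
  foldl (fun N k => prune_round gamma ((2 ^+ k)^-1) N (ord k)) N0 (iota 0 K.+1).

End Defs.

(* Main.v *)
Require Import Defs.
From HB Require Import structures.
From mathcomp Require Import all_boot all_order all_algebra.
From mathcomp Require Import lra.
Import Order.TTheory GRing.Theory Num.Theory.
Local Open Scope ring_scope.

Section Proof.
Variables (R : realFieldType) (T : finType) (dist : T -> T -> R) (lab : T -> bool)
  (gamma : R).
Hypothesis dsym : forall x y, dist x y = dist y x.
Hypothesis dtri : forall x y z, dist x z <= dist x y + dist y z.
Hypothesis dge0 : forall x y, 0 <= dist x y.
Hypothesis gpos : 0 < gamma.

Definition W (x : T) (N : {set T}) (r : R) : Prop :=
  exists2 p, p \in N & lab p = lab x /\ (dist x p < gamma \/ exists s,
    [/\ r <= s, dist x p < s,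
      (forall q, q \in N -> lab q != lab p -> 2 * s <= dist p q) &
      (forall q, q \in N -> q != p -> s - gamma <= dist p q)]).

Lemma W_sub x (N N' : {set T}) r p : p \in N' -> N' \subset N ->
  lab p = lab x /\ (dist x p < gamma \/ exists s,
    [/\ r <= s, dist x p < s,
      (forall q, q \in N -> lab q != lab p -> 2 * s <= dist p q) &
      (forall q, q \in N -> q != p -> s - gamma <= dist p q)]) -> W x N' r.
Proof.
move=> pN' sub [lp [h|[s [h1 h2 h3 h4]]]]; exists p => //; split => //.
  by left.
right; exists s; split => // q qN'.
  by apply: h3; apply: (subsetP sub).
by apply: h4; apply: (subsetP sub).
Qed.

Lemma W_step x (N : {set T}) r c : W x N r -> W x (prune_step dist lab gamma r N c) r.
Proof.
rewrite /prune_step; case: ifP => [/andP [cN /forallP H] | _] //.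
have sub : [set q in N | (q == c) || ~~ (dist c q < r - gamma)] \subset N.
  by apply/subsetP => q; rewrite inE => /andP [].
move=> [p pN [lp hp]].
case pc : ((p == c) || ~~ (dist c p < r - gamma)).
  by apply: (@W_sub x N _ r p) => //; rewrite inE pN pc.
move/negbT: pc; rewrite negb_or negbK => /andP [pnc dcp].
have Hc q : q \in N -> lab q != lab c -> 2 * r <= dist c q.
  by move=> qN lq; move: (H q); rewrite qN lq.
case: hp => [hp | [s [h1 h2 h3 h4]]]; last first.
  have := h4 c cN; rewrite eq_sym pnc dsym => /(_ isT) => h; lra.
have lcp : lab c = lab p.
  case: (boolP (lab c == lab p)) => [/eqP //|ne].
  exfalso; have h1 := Hc p pN ltac:(by rewrite eq_sym); have h0 : (0:R) <= dist c p by apply: dge0. have g0 : (0:R) < gamma by apply: gpos. lra.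
exists c; first by rewrite inE cN eqxx.
split; first by rewrite lcp.
right; exists r; split.
- by [].
- have := dtri x p c; rewrite (dsym p c); lra.
- by move=> q; rewrite inE => /andP [qN _]; apply: Hc.
- move=> q; rewrite inE => /andP [qN]; rewrite eq_sym => /orP [->//|/negbTE h] _.
  by rewrite leNgt h.
Qed.

Lemma W_round x (N : {set T}) r s : W x N r -> W x (prune_round dist lab gamma r N s) r.
Proof.
rewrite /prune_round; elim: s N => [|c s IH] N //= h.
by apply: IH; apply: W_step.
Qed.

Lemma W_mono x (N : {set T}) r r' : r' <= r -> W x N r -> W x N r'.
Proof.
move=> le [p pN [lp [h|[s [h1 h2 h3 h4]]]]]; exists p => //; split => //.
  by left.
by right; exists s; split => //; apply: le_trans h1.
Qed.

Lemma scale_le (m : nat) : ((2 : R) ^+ m.+1)^-1 <= (2 ^+ m)^-1.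
Proof.
have h0 : (0 : R) < 2 ^+ m by apply: exprn_gt0.
rewrite lef_pV2 ?posrE ?exprn_gt0 // exprS.
lra.
Qed.

Lemma W_prune x ord n m (N : {set T}) : W x N ((2 ^+ m)^-1) ->
  exists r, W x (foldl (fun N k => prune_round dist lab gamma ((2 ^+ k)^-1) N (ord k))
                N (iota m n)) r.
Proof.
elim: n m N => [|n IH] m N h /=; first by exists ((2 ^+ m)^-1).
apply: IH; apply: (W_mono _ _ _ _ (scale_le m)); exact: W_round.
Qed.

End Proof.

Theorem lemma1 (R : realFieldType) (T : finType) (dist : T -> T -> R)
  (lab : T -> bool) (gamma : R) (N0 : {set T}) (K : nat)
  (ord : nat -> seq T) :
  is_metric dist -> diam_one dist ->
  is_margin dist lab gamma -> 0 < gamma -> gamma < 1 ->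
  is_net dist gamma N0 ->
  (* K = - ceil(log2 gamma), i.e. 2^(-K-1) < gamma <= 2^(-K) *)
  gamma <= (2 ^+ K)^-1 -> (2 ^+ K.+1)^-1 < gamma ->
  (* each round processes the points in an arbitrary order *)
  (forall k, perm_eq (ord k) (enum T)) ->
  consistent dist lab (prune dist lab gamma ord K N0).
Proof.
move=> [dge0 _ dsym dtri] _ [marg _] gpos _ [_ cov] _ _ _.
have marg' x y : lab x != lab y -> gamma <= dist x y.
  case lx: (lab x); case ly: (lab y) => //= _.
    by apply: marg; rewrite ?lx ?ly.
  by rewrite dsym; apply: marg; rewrite ?lx ?ly.
move=> x q qN hq; case: (boolP (lab q == lab x)) => [/eqP //|nq]; exfalso.
have W0 : @W R T dist lab gamma x N0 ((2 ^+ 0)^-1).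
  have [p pN dp] := cov x.
  exists p => //; split; last by left.
  case: (boolP (lab p == lab x)) => [/eqP //|ne]; exfalso.
  have := marg' _ _ ne; rewrite dsym; lra.
have [r [p pN [lp hp]]] := @W_prune R T dist lab gamma dsym dtri dge0 gpos x ord K.+1 0 N0 W0.
rewrite /prune in qN hq.
have := hq p pN.
have lqx : lab q != lab x by [].
case: hp => [hp | [s [h1 h2 h3 h4]]].
  have := marg' _ _ lqx; rewrite dsym; lra.
have := h3 q qN; rewrite lp => /(_ lqx).
have := dtri p x q; rewrite (dsym p x); lra.
Qed.
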